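(* Let $p\in(1,\infty)$. In the Banach space $\ell_p$ every closed convex cone has a convex polar if and only if $p=2$. More specifically, for $p\neq 2$ there exist wedges in $\ell_p$ (already in a three-dimensional coordinate subspace $\ell_p^3$) whose polars are not convex.
   Context: $\ell_p$ is the real sequence space with norm $\|z\|_p=(\sum_i|z_i|^p)^{1/p}$; its dual is $\ell_q$ with $q=p/(p-1)$ and the usual pairing. The normalized duality map $J:X\to X^*$ of a Banach space is defined by $\langle Jx,x\rangle=\|Jx\|_{X^*}\|x\|=\|x\|^2=\|Jx\|_{X^*}^2$. For a closed convex cone $K$, the metric projection is $P_Kx=\operatorname{argmin}\{\|x-k\|:k\in K\}$ and the polar is $K^\circ=\{x:P_Kx=0\}$. With $S^*$ the dual unit sphere, for $a,b\in S^*$, $b\notin\{a,-a\}$, $\delta(a,b)=\{(\lambda a+\mu b)/\|\lambda a+\mu b\|:\lambda,\mu\ge0,(\lambda,\mu)\ne(0,0)\}$ and the wedge is $W(a,b)=\{x:\langle c,x\rangle\le 0\ \forall c\in\delta(a,b)\}$. *)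

(* Defs.v *)
From mathcomp Require Import all_boot all_order all_algebra.
From mathcomp Require Import all_classical all_reals all_analysis.
Set Implicit Arguments. Unset Strict Implicit. Unset Printing Implicit Defensive.
Import Order.TTheory GRing.Theory Num.Theory numFieldNormedType.Exports.
Local Open Scope classical_set_scope.
Local Open Scope ring_scope.

Section Lp.
Variable R : realType.

Definition conj_exp (p : R) : R := p / (p - 1).

Definition in_lp (p : R) (x : nat -> R) : Prop :=
  cvgn (series (fun i => `|x i| `^ p)).

Definition lpnorm (p : R) (x : nat -> R) : R :=
  (limn (series (fun i => `|x i| `^ p))) `^ p^-1.

Definition pairing (c x : nat -> R) : R :=
  limn (series (fun i => c i * x i)).

Definition lp_closed (p : R) (K : set (nat -> R)) : Prop :=
  forall (u : nat -> nat -> R) (x : nat -> R),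
    (forall n, K (u n)) -> in_lp p x ->
    (fun n => lpnorm p (fun i => u n i - x i)) @ \oo --> (0 : R) -> K x.

Definition cvx_set (K : set (nat -> R)) : Prop :=
  forall x y (t : R), K x -> K y -> 0 <= t -> t <= 1 ->
    K (fun i => t * x i + (1 - t) * y i).

Definition cone (K : set (nat -> R)) : Prop :=
  forall x (l : R), K x -> 0 <= l -> K (fun i => l * x i).

Definition closed_convex_cone (p : R) (K : set (nat -> R)) : Prop :=
  K `<=` in_lp p /\ lp_closed p K /\ cvx_set K /\ cone K.

Definition metric_proj (p : R) (K : set (nat -> R)) (x : nat -> R) : set (nat -> R) :=
  [set k | K k /\ forall k', K k' ->
     lpnorm p (fun i => x i - k i) <= lpnorm p (fun i => x i - k' i)].

Definition polar (p : R) (K : set (nat -> R)) : set (nat -> R) :=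
  [set x | in_lp p x /\ metric_proj p K x = [set (fun _ => 0)]].

Definition dual_sphere (p : R) (a : nat -> R) : Prop :=
  in_lp (conj_exp p) a /\ lpnorm (conj_exp p) a = 1.

Definition delta (p : R) (a b : nat -> R) : set (nat -> R) :=
  [set c | exists l m : R, 0 <= l /\ 0 <= m /\ (l != 0 \/ m != 0) /\
     c = (fun i => (l * a i + m * b i) /
                   lpnorm (conj_exp p) (fun j => l * a j + m * b j))].

Definition wedge (p : R) (a b : nat -> R) : set (nat -> R) :=
  [set x | in_lp p x /\ forall c, delta p a b c -> pairing c x <= 0].

End Lp.

(* Main.v *)
Require Import Defs.
From mathcomp Require Import all_boot all_order all_algebra.
From mathcomp Require Import all_classical all_reals all_analysis.
From mathcomp Require Import ring lra.
Import Order.TTheory GRing.Theory Num.Theory numFieldNormedType.Exports.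
Local Open Scope classical_set_scope.
Local Open Scope ring_scope.

Section Aux.
Variable R : realType.
Implicit Types (f g x y v k : nat -> R) (p : R).

Lemma series_fin3 f : (forall i, (3 <= i)%N -> f i = 0) ->
  series f @ \oo --> f 0%N + f 1%N + f 2%N.
Proof.
move=> f0; apply: cvg_near_cst; near=> n.
have n3 : (3 <= n)%N by near: n; exists 3%N.
rewrite /series /= (@big_cat_nat _ _ _ 3)//=.
have -> : \sum_(3 <= i < n) f i = 0.
  by rewrite big_nat_cond big1// => i /andP[/andP[hi _] _]; rewrite f0.
by rewrite addr0 !big_nat_recr//= big_geq// add0r.
Unshelve. all: by end_near. Qed.

Lemma lim_fin3 f : (forall i, (3 <= i)%N -> f i = 0) ->
  limn (series f) = f 0%N + f 1%N + f 2%N.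
Proof. by move=> /series_fin3/cvg_lim; apply. Qed.

Lemma cvg_fin3 f : (forall i, (3 <= i)%N -> f i = 0) -> cvgn (series f).
Proof. by move=> /series_fin3 h; apply/cvg_ex; eexists; exact: h. Qed.

Lemma series_ge0 f : (forall i, 0 <= f i) -> cvgn (series f) ->
  forall n, series f n <= limn (series f).
Proof.
move=> f0 cf n; apply: nondecreasing_cvgn_le => //.
move=> m k mk; rewrite /series /=.
exact: (@nondecreasing_series R f xpredT 0 (fun i _ _ => f0 i)).
Qed.

Lemma term_le_lim f : (forall i, 0 <= f i) -> cvgn (series f) ->
  forall n, f n <= limn (series f).
Proof.
move=> f0 cf n; rewrite (le_trans _ (@series_ge0 f f0 cf n.+1))//.
rewrite /series /= big_nat_recr//= lerDr.
by rewrite sumr_ge0.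
Qed.

Lemma lim_ge0 f : (forall i, 0 <= f i) -> cvgn (series f) -> 0 <= limn (series f).
Proof. by move=> f0 cf; rewrite (le_trans _ (@term_le_lim f f0 cf 0)). Qed.


Lemma powR_sum_le p (a b : R) : 0 < p ->
  `|a + b| `^ p <= 2 `^ p * (`|a| `^ p + `|b| `^ p).
Proof.
move=> p0.
have key (u v : R) : `|u| <= `|v| -> `|u + v| `^ p <= 2 `^ p * (`|u| `^ p + `|v| `^ p).
  move=> uv.
  have h1 : `|u + v| <= 2 * `|v|.
    by rewrite (le_trans (ler_normD _ _))// mulr2n mulrDl mul1r lerD2r.
  have h2 := ge0_ler_powR (ltW p0) (normr_ge0 (u+v)) (mulr_ge0 (ler0n _ 2) (normr_ge0 v)) h1.
  rewrite (le_trans h2)// powRM// ler_wpM2l ?powR_ge0// lerDr powR_ge0//.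
have [ab|ba] := leP `|a| `|b|; first exact: key.
by rewrite addrC [X in _ * X]addrC; apply: key; rewrite ltW.
Qed.

Lemma cvg_series_ext f g : f =1 g -> cvgn (series f) -> cvgn (series g).
Proof. by move=> /funext ->. Qed.

Lemma in_lp_comb p (al be : R) x y : 0 < p -> in_lp p x -> in_lp p y ->
  in_lp p (fun i => al * x i + be * y i).
Proof.
move=> p0 cx cy; rewrite /in_lp.
pose v := fun i => 2 `^ p * (`|al| `^ p * `|x i| `^ p + `|be| `^ p * `|y i| `^ p).
apply: (@series_le_cvg _ _ v).
- by move=> i; rewrite powR_ge0.
- by move=> i; rewrite /v mulr_ge0 ?powR_ge0// addr_ge0// mulr_ge0// powR_ge0.
- move=> i; rewrite /v (le_trans (@powR_sum_le p _ _ p0))// !normrM !powRM//.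
- have -> : v = (2 `^ p) *: ((`|al| `^ p) *: (fun i => `|x i| `^ p) + (`|be| `^ p) *: (fun i => `|y i| `^ p)).
    by apply/funext => i.
  by apply: is_cvg_seriesZ; apply: is_cvg_seriesD; apply: is_cvg_seriesZ.
Qed.

Lemma powRinv_le p (a b : R) : 0 < p -> 0 <= a -> 0 <= b ->
  (a `^ p^-1 <= b `^ p^-1) = (a <= b).
Proof.
move=> p0 a0 b0; have ip0 : 0 < p^-1 by rewrite invr_gt0.
apply/idP/idP => [|ab]; last by apply: (ge0_ler_powR (ltW ip0)); rewrite ?nnegrE.
apply: contraTT; rewrite -!ltNge => ba.
by apply: (gt0_ltr_powR ip0); rewrite ?nnegrE.
Qed.

Lemma powR_pinv p (a : R) : 0 < p -> 0 <= a -> (a `^ p) `^ p^-1 = a.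
Proof.
by move=> p0 a0; rewrite -powRrM mulfV ?gt_eqF// powRr1.
Qed.

Lemma coord_le_lpnorm p v n : 0 < p -> in_lp p v -> `|v n| <= lpnorm p v.
Proof.
move=> p0 cv; rewrite /lpnorm -[X in X <= _](@powR_pinv p)//.
rewrite powRinv_le//; last by apply: lim_ge0 => // i; rewrite powR_ge0.
  by apply: term_le_lim => // i; rewrite powR_ge0.
Qed.

Lemma pow2E (a : R) : `|a| `^ 2 = a ^+ 2.
Proof. by rewrite powR_mulrn// real_normK// num_real. Qed.

Lemma ltr0n2 : (0 : R) < 2. Proof. by []. Qed.

Definition sq2 v := limn (series (fun i => v i ^+ 2)).
Definition ip2 x y := limn (series (fun i => x i * y i)).

Lemma lpnorm2E v : lpnorm 2 v = (sq2 v) `^ 2^-1.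
Proof. by rewrite /lpnorm /sq2; congr (limn (series _) `^ _); apply/funext=> i; rewrite pow2E. Qed.

Lemma in_lp2E v : in_lp 2 v = cvgn (series (fun i => v i ^+ 2)).
Proof. by rewrite /in_lp; congr (cvgn (series _)); apply/funext=> i; rewrite pow2E. Qed.

Lemma cvg_ip2 x y : in_lp 2 x -> in_lp 2 y -> cvgn (series (fun i => x i * y i)).
Proof.
move=> cx cy.
have h1 := @in_lp_comb 2 1 1 x y ltr0n2 cx cy.
have h2 := @in_lp_comb 2 1 (-1) x y ltr0n2 cx cy.
rewrite in_lp2E in h1; rewrite in_lp2E in h2.
have -> : (fun i => x i * y i) = (4^-1 : R) *: ((fun i => (1 * x i + 1 * y i) ^+ 2) - (fun i => (1 * x i + -1 * y i) ^+ 2)).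
  by apply/funext => i; change (x i * y i = 4^-1 * ((1 * x i + 1 * y i) ^+ 2 - (1 * x i + -1 * y i) ^+ 2)); field.
by apply: is_cvg_seriesZ; apply: is_cvg_seriesB.
Qed.

Lemma sE (a b : R) : a *: b = a * b. Proof. by []. Qed.

Lemma sq2_sub x k : in_lp 2 x -> in_lp 2 k ->
  sq2 (fun i => x i - k i) = sq2 x - 2 * ip2 x k + sq2 k.
Proof.
move=> cx ck; have cxk := @cvg_ip2 x k cx ck.
rewrite in_lp2E in cx; rewrite in_lp2E in ck.
rewrite /sq2 /ip2.
have -> : (fun i => (x i - k i) ^+ 2) = ((fun i => x i ^+ 2) + ((-2) *: (fun i => x i * k i))) + (fun i => k i ^+ 2).
  by apply/funext => i; change ((x i - k i) ^+ 2 = (x i ^+ 2 + (-2) * (x i * k i)) + k i ^+ 2); ring.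
rewrite lim_seriesD//; last by apply: is_cvg_seriesD => //; apply: is_cvg_seriesZ.
rewrite lim_seriesD//; last by apply: is_cvg_seriesZ.
by rewrite lim_seriesZ// sE; ring.
Qed.

Lemma ip2_comb (t s : R) x y k : in_lp 2 x -> in_lp 2 y -> in_lp 2 k ->
  ip2 (fun i => t * x i + s * y i) k = t * ip2 x k + s * ip2 y k.
Proof.
move=> cx cy ck; have cxk := @cvg_ip2 x k cx ck; have cyk := @cvg_ip2 y k cy ck.
rewrite /ip2.
have -> : (fun i => (t * x i + s * y i) * k i) = (t *: (fun i => x i * k i)) + (s *: (fun i => y i * k i)).
  by apply/funext => i; change ((t * x i + s * y i) * k i = t * (x i * k i) + s * (y i * k i)); ring.
rewrite lim_seriesD//; try by apply: is_cvg_seriesZ.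
by rewrite !lim_seriesZ.
Qed.

Lemma ip2_scale x (e : R) k : in_lp 2 x -> in_lp 2 k ->
  ip2 x (fun i => e * k i) = e * ip2 x k.
Proof.
move=> cx ck; have cxk := @cvg_ip2 x k cx ck; rewrite /ip2.
have -> : (fun i => x i * (e * k i)) = e *: (fun i => x i * k i).
  by apply/funext => i; change (x i * (e * k i) = e * (x i * k i)); ring.
by rewrite lim_seriesZ.
Qed.

Lemma sq2_scale (e : R) k : in_lp 2 k ->
  sq2 (fun i => e * k i) = e ^+ 2 * sq2 k.
Proof.
move=> ck; rewrite in_lp2E in ck; rewrite /sq2.
have -> : (fun i => (e * k i) ^+ 2) = e ^+ 2 *: (fun i => k i ^+ 2).
  by apply/funext => i; change ((e * k i) ^+ 2 = e ^+ 2 * (k i ^+ 2)); ring.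
by rewrite lim_seriesZ.
Qed.

Lemma sq2_ge0 v : in_lp 2 v -> 0 <= sq2 v.
Proof. by rewrite in_lp2E => cv; apply: lim_ge0 => // i; rewrite sqr_ge0. Qed.

Lemma sq2_eq0 v : in_lp 2 v -> sq2 v <= 0 -> v = (fun _ => 0).
Proof.
rewrite in_lp2E => cv h; apply/funext => i.
have := @term_le_lim (fun i => v i ^+ 2) (fun i => sqr_ge0 _) cv i.
move=> /le_trans /(_ h); rewrite -[_ <= 0]/(v i ^+ 2 <= 0).
by rewrite le_eqVlt ltNge sqr_ge0 orbF sqrf_eq0 => /eqP.
Qed.

Lemma in_lp_sub p x y : 0 < p -> in_lp p x -> in_lp p y -> in_lp p (fun i => x i - y i).
Proof.
move=> p0 cx cy; have := @in_lp_comb p 1 (-1) x y p0 cx cy.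
by rewrite /in_lp; congr (cvgn (series _)); apply/funext => i; rewrite mul1r mulN1r.
Qed.

Lemma in_lp_scale p (e : R) y : 0 < p -> in_lp p y -> in_lp p (fun i => e * y i).
Proof.
move=> p0 cy; have := @in_lp_comb p e 0 y y p0 cy cy.
by rewrite /in_lp; congr (cvgn (series _)); apply/funext => i; rewrite mul0r addr0.
Qed.

Lemma subr0_fun v : (fun i => v i - 0) = v.
Proof. by apply/funext => i; rewrite subr0. Qed.

Lemma norm2_le v w : in_lp 2 v -> in_lp 2 w ->
  (lpnorm 2 v <= lpnorm 2 w) = (sq2 v <= sq2 w).
Proof.
by move=> cv cw; rewrite !lpnorm2E powRinv_le// ?sq2_ge0.
Qed.

Lemma polar2_ip (K : set (nat -> R)) x : K `<=` in_lp 2 -> cone K -> polar 2 K x ->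
  K (fun _ => 0) /\ forall k, K k -> ip2 x k <= 0.
Proof.
move=> Kl cK [cx hx].
have : metric_proj 2 K x (fun _ => 0) by rewrite hx.
case=> K0; rewrite subr0_fun => hmin; split => // k Kk.
have ck := Kl _ Kk.
rewrite leNgt; apply/negP => ip0.
have key (S c : R) : 0 <= S -> 0 < c ->
    (forall e, 0 < e -> 0 <= - 2 * (e * c) + e ^+ 2 * S) -> False.
  move=> S0 c0 he.
  pose e := c / (S + 1).
  have e0 : 0 < e by rewrite divr_gt0// ltr_wpDl.
  have eS : e * S <= c.
    rewrite /e mulrAC ler_pdivrMr ?ltr_wpDl// ler_pM2l//; lra.
  have := he e e0.
  have : e * (e * S - 2 * c) < 0 by rewrite pmulr_rlt0//; lra.
  have -> : e * (e * S - 2 * c) = - 2 * (e * c) + e ^+ 2 * S by ring.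
  lra.
apply: (key (sq2 k) (ip2 x k)) => //; first exact: sq2_ge0.
move=> e e0.
have := hmin _ (cK _ _ Kk (ltW e0)).
have cek : in_lp 2 (fun i => e * k i) by apply: in_lp_scale.
rewrite (@norm2_le _ _ cx (@in_lp_sub _ _ _ ltr0n2 cx cek)) (@sq2_sub _ _ cx cek).
rewrite (@ip2_scale _ _ _ cx ck) (@sq2_scale _ _ ck); lra.
Qed.

Lemma polar_convex2 (K : set (nat -> R)) : closed_convex_cone 2 K -> cvx_set (polar 2 K).
Proof.
move=> [Kl [_ [_ cK]]] x y t Px Py t0 t1.
have [K0 hx] := @polar2_ip K x Kl cK Px.
have [_ hy] := @polar2_ip K y Kl cK Py.
have cx := Px.1; have cy := Py.1.
have cz : in_lp 2 (fun i => t * x i + (1 - t) * y i) by apply: in_lp_comb.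
split => //; apply/seteqP; split => k /=.
- case=> Kk hk; have ck := Kl _ Kk.
  have czk := @in_lp_sub _ _ _ ltr0n2 cz ck.
  have := hk _ K0; rewrite subr0_fun (@norm2_le _ _ czk cz) (@sq2_sub _ _ cz ck).
  rewrite (@ip2_comb _ _ _ _ _ cx cy ck) => h.
  apply: (@sq2_eq0 _ ck).
  have h1 := hx _ Kk; have h2 := hy _ Kk.
  have h3 : 0 <= 1 - t by lra.
  have : t * ip2 x k + (1 - t) * ip2 y k <= 0.
    rewrite -oppr_ge0 opprD -!mulrN addr_ge0 ?mulr_ge0 ?oppr_ge0 //.
  lra.
- move=> ->; split; first exact: K0.
  move=> k' Kk'; have ck := Kl _ Kk'.
  have czk := @in_lp_sub _ _ _ ltr0n2 cz ck.
  rewrite subr0_fun (@norm2_le _ _ cz czk) (@sq2_sub _ _ cz ck).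
  rewrite (@ip2_comb _ _ _ _ _ cx cy ck).
  have h1 := hx _ Kk'; have h2 := hy _ Kk'.
  have h3 : 0 <= 1 - t by lra.
  have : t * ip2 x k' + (1 - t) * ip2 y k' <= 0.
    rewrite -oppr_ge0 opprD -!mulrN addr_ge0 ?mulr_ge0 ?oppr_ge0 //.
  have := @sq2_ge0 _ ck; lra.
Qed.

End Aux.

Section Aux2.
Variable R : realType.
Implicit Types (f g x y v k : nat -> R) (p : R).

Lemma powR_mvt p (a b : R) : 0 < a -> a < b ->
  exists2 c, a < c < b & b `^ p - a `^ p = p * c `^ (p - 1) * (b - a).
Proof.
move=> a0 ab.
have := @MVT R (@powR R ^~ p) (fun z : R => p * z `^ (p - 1)) a b ab.
case.
- move=> z; rewrite in_itv /= => /andP[az _].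
  by apply: is_derive1_powR; apply: lt_trans az.
- apply: derivable_within_continuous => z; rewrite in_itv /= => /andP[az _].
  by apply: derivable_powR; rewrite in_itv /= andbT; apply: lt_le_trans az.
- by move=> c; rewrite in_itv /= => hc ->; exists c.
Qed.

Lemma pow1 (p : R) : 1 `^ p = 1.
Proof. by rewrite powR1. Qed.

Lemma powR_lt1 p (c : R) : 0 < p -> 0 <= c -> c < 1 -> c `^ p < 1.
Proof.
move=> p0 c0 c1; rewrite -(pow1 p).
by apply: (gt0_ltr_powR p0); rewrite ?nnegrE.
Qed.

Lemma powR_gt1 p (c : R) : 0 < p -> 1 < c -> 1 < c `^ p.
Proof.
move=> p0 c1; rewrite -(pow1 p).
by apply: (gt0_ltr_powR p0); rewrite ?nnegrE// ltW// (lt_trans _ c1).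
Qed.

Lemma bern_strict p t : 1 < p -> t != 0 -> 1 - p * t < `|1 - t| `^ p.
Proof.
move=> p1 t0.
have p0 : 0 < p by lra.
have pm0 : 0 < p - 1 by lra.
have [a0|a0] := leP (1 - t) 0.
  have : p <= p * t by rewrite -[X in X <= _]mulr1 ler_pM2l//; lra.
  by have := powR_ge0 `|1 - t| p; lra.
rewrite gtr0_norm//.
have [a1|a1] := ltP (1 - t) 1.
  have [c /andP[c1 c2] h] := @powR_mvt p _ _ a0 a1.
  rewrite pow1 in h.
  have hc := @powR_lt1 (p - 1) c pm0 (ltW (lt_trans a0 c1)) c2.
  have tp : 0 < t by lra.
  have ht : c `^ (p - 1) * t < t by rewrite gtr_pMl.
  have e : (1 - t) `^ p = 1 - (1 - (1 - t) `^ p) by ring.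
  rewrite h in e; rewrite e.
  have -> : p * c `^ (p - 1) * (1 - (1 - t)) = p * (c `^ (p - 1) * t) by ring.
  have : p * (c `^ (p - 1) * t) < p * t by rewrite ltr_pM2l.
  lra.
have a1' : 1 < 1 - t.
  by rewrite lt_neqAle a1 andbT; apply/eqP => h; move: t0; rewrite (_ : t = 0)//; lra.
have [c /andP[c1 c2] h] := @powR_mvt p _ _ ltr01 a1'.
rewrite pow1 in h.
have hc := @powR_gt1 (p - 1) c pm0 c1.
have tn : 0 < - t by lra.
have ht : - t < c `^ (p - 1) * - t by rewrite ltr_pMl.
have : p * - t < p * (c `^ (p - 1) * - t) by rewrite ltr_pM2l//; lra.
have e : (1 - t) `^ p = 1 + ((1 - t) `^ p - 1) by ring.
rewrite h in e; rewrite e.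
have -> : p * c `^ (p - 1) * (1 - t - 1) = p * (c `^ (p - 1) * - t) by ring.
lra.
Qed.

Lemma bern p t : 1 < p -> 1 - p * t <= `|1 - t| `^ p.
Proof.
move=> p1; have [->|t0] := eqVneq t 0.
  by rewrite mulr0 !subr0 normr1 pow1.
exact/ltW/bern_strict.
Qed.

Definition Sp p v := limn (series (fun i => `|v i| `^ p)).

Lemma Sp_ge0 p v : in_lp p v -> 0 <= Sp p v.
Proof. by move=> cv; apply: lim_ge0 => // i; rewrite powR_ge0. Qed.

Lemma normp_le p v w : 0 < p -> in_lp p v -> in_lp p w ->
  (lpnorm p v <= lpnorm p w) = (Sp p v <= Sp p w).
Proof. by move=> p0 cv cw; rewrite /lpnorm powRinv_le// -/(Sp p _) Sp_ge0. Qed.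

Lemma polar_intro p (K : set (nat -> R)) x : 0 < p -> K `<=` in_lp p -> K (fun _ => 0) ->
  in_lp p x -> (forall k, K k -> k <> (fun _ => 0) -> Sp p x < Sp p (fun i => x i - k i)) ->
  polar p K x.
Proof.
move=> p0 Kl K0 cx hK; split => //; apply/seteqP; split => k /=.
- case=> Kk hk; have ck := Kl _ Kk.
  have cxk := @in_lp_sub _ _ _ _ p0 cx ck.
  have := hk _ K0; rewrite subr0_fun (@normp_le _ _ _ p0 cxk cx) => h.
  apply: contrapT => kn0; have := hK _ Kk kn0; rewrite ltNge h //.
- move=> ->; split; first exact: K0.
  move=> k' Kk'; have ck := Kl _ Kk'.
  have cxk := @in_lp_sub _ _ _ _ p0 cx ck.
  rewrite subr0_fun (@normp_le _ _ _ p0 cx cxk).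
  have [->|kn0] := pselect (k' = (fun _ => 0)); first by rewrite subr0_fun.
  exact/ltW/hK.
Qed.

Lemma not_polar p (K : set (nat -> R)) z k : 0 < p -> K k -> in_lp p z -> in_lp p k ->
  Sp p (fun i => z i - k i) < Sp p z -> ~ polar p K z.
Proof.
move=> p0 Kk cz ck h [_ hz].
have : metric_proj p K z (fun _ => 0) by rewrite hz.
case=> _; rewrite subr0_fun => /(_ _ Kk).
rewrite (@normp_le _ _ _ p0 cz (@in_lp_sub _ _ _ _ p0 cz ck)).
by rewrite leNgt h.
Qed.

Lemma powR_exp_lt (a x y : R) : 1 < a -> x < y -> a `^ x < a `^ y.
Proof.
move=> a1 xy; rewrite /powR gt_eqF ?(lt_trans ltr01 a1)//.
by rewrite ltr_expR ltr_pM2r// ln_gt0.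
Qed.

Lemma descent_gt2 p : 2 < p ->
  exists e : R, [/\ 0 < e, e < 2^-1 &
    (1 - e) `^ p + (2^-1 + e) `^ p + (2^-1 + e) `^ p < 1 + 2^-1 `^ p + 2^-1 `^ p].
Proof.
move=> p2.
have p0 : 0 < p by lra.
have pm0 : 0 < p - 1 by lra.
pose r : R := 2 `^ (p - 1)^-1.
have rp : r `^ (p - 1) = 2.
  by rewrite /r -powRrM mulVf ?gt_eqF// powRr1.
have r1 : 1 < r.
  rewrite /r -[X in X < _](powRr0 2); apply: powR_exp_lt; first by lra.
  by rewrite invr_gt0.
have r2 : r < 2.
  rewrite /r -[X in _ < X](@powRr1 R 2)//; apply: powR_exp_lt; first by lra.
  by rewrite invf_lt1//; lra.
pose e := (1 - r / 2) / (r + 1).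
have e0 : 0 < e by rewrite /e divr_gt0//; lra.
have e1 : e < 2^-1.
  rewrite /e ltr_pdivrMr; last by lra.
  lra.
have key : r * (2^-1 + e) = 1 - e.
  by rewrite /e; field; lra.
exists e; split => //.
have a0 : 0 < 1 - e by lra.
have a1 : 1 - e < 1 by lra.
have [c1 /andP[c11 c12] h1] := @powR_mvt p _ _ a0 a1.
have b0 : (0 : R) < 2^-1 by [].
have b1 : (2^-1 : R) < 2^-1 + e by lra.
have [c2 /andP[c21 c22] h2] := @powR_mvt p _ _ b0 b1.
rewrite pow1 in h1.
have i1 : (1 - e) `^ (p - 1) < c1 `^ (p - 1).
  by apply: (gt0_ltr_powR pm0); rewrite ?nnegrE// ltW// (lt_trans a0).
have i2 : c2 `^ (p - 1) < (2^-1 + e) `^ (p - 1).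
  by apply: (gt0_ltr_powR pm0); rewrite ?nnegrE// ltW// (lt_trans b0).
have i3 : 2 * (2^-1 + e) `^ (p - 1) = (1 - e) `^ (p - 1).
  have r0 : 0 <= r by lra.
  have w0 : 0 <= 2^-1 + e by lra.
  by rewrite -key (powRM _ r0 w0) rp.
have pe : 0 < p * e by rewrite mulr_gt0.
move: h1 h2 i1 i2 i3 pe.
move: ((1 - e) `^ p) ((2^-1 + e) `^ p) ((2^-1 : R) `^ p) => A B C.
move: (c1 `^ (p - 1)) (c2 `^ (p - 1)) ((1 - e) `^ (p - 1)) ((2^-1 + e) `^ (p - 1)) => C1 C2 D E.
move=> h1 h2 i1 i2 i3 pe.
have -> : A = 1 - p * e * C1.
  by move: h1; rewrite (_ : 1 - (1 - e) = e); [move=> h1; rewrite -[A]opprK -[X in - X](addrK 1) opprB (addrC _ 1) h1; ring|ring].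
have -> : B = C + p * e * C2.
  by move: h2; rewrite (_ : 2^-1 + e - 2^-1 = e); [move=> h2; rewrite -[B](subrK C) h2; ring|ring].
have : p * e * (2 * C2 - C1) < 0 by rewrite pmulr_rlt0//; lra.
move=> h; have -> : 1 - p * e * C1 + (C + p * e * C2) + (C + p * e * C2) = 1 + C + C + p * e * (2 * C2 - C1) by ring.
lra.
Qed.

Lemma descent_lt2 p : 1 < p -> p < 2 ->
  exists e : R, [/\ 0 < e, e < 2^-1 &
    (1 + e) `^ p + (2^-1 - e) `^ p + (2^-1 - e) `^ p < 1 + 2^-1 `^ p + 2^-1 `^ p].
Proof.
move=> p1 p2.
have p0 : 0 < p by lra.
have pm0 : 0 < p - 1 by lra.
pose r : R := 2 `^ (p - 1)^-1.
have rp : r `^ (p - 1) = 2.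
  by rewrite /r -powRrM mulVf ?gt_eqF// powRr1.
have r2 : 2 < r.
  rewrite /r -[X in X < _](@powRr1 R 2)//; apply: powR_exp_lt; first by lra.
  by rewrite invf_gt1//; lra.
pose e := (r / 2 - 1) / (r + 1).
have e0 : 0 < e by rewrite /e divr_gt0//; lra.
have e1 : e < 2^-1.
  rewrite /e ltr_pdivrMr; last by lra.
  lra.
have key : r * (2^-1 - e) = 1 + e.
  by rewrite /e; field; lra.
exists e; split => //.
have a0 : (0 : R) < 1 by [].
have a1 : 1 < 1 + e by lra.
have [c1 /andP[c11 c12] h1] := @powR_mvt p _ _ a0 a1.
have b0 : (0 : R) < 2^-1 - e by lra.
have b1 : (2^-1 - e : R) < 2^-1 by lra.
have [c2 /andP[c21 c22] h2] := @powR_mvt p _ _ b0 b1.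
rewrite pow1 in h1.
have i1 : c1 `^ (p - 1) < (1 + e) `^ (p - 1).
  by apply: (gt0_ltr_powR pm0); rewrite ?nnegrE//; lra.
have i2 : (2^-1 - e) `^ (p - 1) < c2 `^ (p - 1).
  by apply: (gt0_ltr_powR pm0); rewrite ?nnegrE//; lra.
have i3 : 2 * (2^-1 - e) `^ (p - 1) = (1 + e) `^ (p - 1).
  have r0 : 0 <= r by lra.
  have w0 : 0 <= 2^-1 - e by lra.
  by rewrite -key (powRM _ r0 w0) rp.
have pe : 0 < p * e by rewrite mulr_gt0.
move: h1 h2 i1 i2 i3 pe.
move: ((1 + e) `^ p) ((2^-1 - e) `^ p) ((2^-1 : R) `^ p) => A B C.
move: (c1 `^ (p - 1)) (c2 `^ (p - 1)) ((1 + e) `^ (p - 1)) ((2^-1 - e) `^ (p - 1)) => C1 C2 D E.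
move=> h1 h2 i1 i2 i3 pe.
have -> : A = 1 + p * e * C1.
  by move: h1; rewrite (_ : 1 + e - 1 = e); [move=> h1; rewrite -[A](subrK 1) h1; ring|ring].
have -> : B = C - p * e * C2.
  by move: h2; rewrite (_ : 2^-1 - (2^-1 - e) = e); [move=> h2; rewrite -[B]opprK -[X in - X](addrK C) opprB (addrC _ C) h2; ring|ring].
have : p * e * (C1 - 2 * C2) < 0 by rewrite pmulr_rlt0//; lra.
move=> h; have -> : 1 + p * e * C1 + (C - p * e * C2) + (C - p * e * C2) = 1 + C + C + p * e * (C1 - 2 * C2) by ring.
lra.
Qed.

End Aux2.

Arguments Sp {R}.

Section Aux3.
Variable R : realType.
Implicit Types (f g x y v k : nat -> R) (p : R).

Definition fin3 v := forall i, (3 <= i)%N -> v i = 0.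

Lemma Sp_fin3 p v : 0 < p -> fin3 v ->
  in_lp p v /\ Sp p v = `|v 0%N| `^ p + `|v 1%N| `^ p + `|v 2%N| `^ p.
Proof.
move=> p0 fv.
have h : forall i, (3 <= i)%N -> `|v i| `^ p = 0.
  by move=> i /fv ->; rewrite normr0 powR0// gt_eqF.
by split; [exact: cvg_fin3 h | exact: lim_fin3 h].
Qed.

Lemma pairing_fin3 c x : fin3 c -> pairing c x = c 0%N * x 0%N + c 1%N * x 1%N + c 2%N * x 2%N.
Proof.
move=> fc; rewrite /pairing; apply: lim_fin3 => i /fc ->; exact: mul0r.
Qed.

Lemma series_split3 f n : (3 <= n)%N ->
  series f n = f 0%N + f 1%N + f 2%N + \sum_(3 <= j < n) f j.
Proof.
move=> n3; rewrite /series /= (@big_cat_nat _ _ _ 3)//=.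
by rewrite !big_nat_recr//= big_geq// add0r.
Qed.

Lemma strict_gen p x k : 0 < p -> fin3 x -> in_lp p k -> k <> (fun _ => 0) ->
  `|x 0%N| `^ p + `|x 1%N| `^ p + `|x 2%N| `^ p <=
  `|x 0%N - k 0%N| `^ p + `|x 1%N - k 1%N| `^ p + `|x 2%N - k 2%N| `^ p ->
  ((k 0%N != 0) || (k 1%N != 0) || (k 2%N != 0) ->
  `|x 0%N| `^ p + `|x 1%N| `^ p + `|x 2%N| `^ p <
  `|x 0%N - k 0%N| `^ p + `|x 1%N - k 1%N| `^ p + `|x 2%N - k 2%N| `^ p) ->
  Sp p x < Sp p (fun i => x i - k i).
Proof.
move=> p0 fx ck kn0 hle hlt.
have [cx ->] := @Sp_fin3 p x p0 fx.
have cxk := @in_lp_sub _ _ _ _ p0 cx ck.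
pose f := fun i => `|x i - k i| `^ p.
have f0 : forall i, 0 <= f i by move=> i; rewrite powR_ge0.
have hS := @series_ge0 _ f f0 cxk.
have [i ki] : exists i, k i != 0.
  apply: contrapT => hn; apply: kn0; apply/funext => i.
  by apply/eqP; apply: contrapT => hi; apply: hn; exists i; apply/negP.
have [i3|i3] := leqP 3 i.
  have := hS i.+1; rewrite (@series_split3 f i.+1); last exact: leqW.
  rewrite (@big_nat_recr _ _ _ i 3 f i3) /=.
  have tail : 0 <= \sum_(3 <= j < i) f j by rewrite sumr_ge0.
  have fi : 0 < f i.
    by rewrite /f fx// sub0r normrN powR_gt0// normr_gt0.
  rewrite /Sp -/f; move: hle; rewrite -/(f 0%N) -/(f 1%N) -/(f 2%N).
  lra.
have h3 := hS 3%N; rewrite (@series_split3 f 3) in h3; last by [].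
rewrite big_geq in h3; last by [].
have : (k 0%N != 0) || (k 1%N != 0) || (k 2%N != 0).
  move: i3 ki; case: i => [|[|[|n]]] hi ki.
  - by rewrite ki.
  - by rewrite ki orbT.
  - by rewrite ki orbT.
  - by [].
move=> /hlt; rewrite /Sp -/f -/(f 0%N) -/(f 1%N) -/(f 2%N).
move: h3; rewrite addr0. lra.
Qed.

End Aux3.

Arguments Sp {R}.
Arguments fin3 {R}.

Section Aux4.
Variable R : realType.
Implicit Types (f g x y v k : nat -> R) (p : R).

Definition uu p : R := 2 `^ (- (conj_exp p)^-1).
Definition av p : nat -> R := fun i => match i with O => uu p | S O => uu p | _ => 0 end.
Definition bv p : nat -> R := fun i => match i with O => uu p | S (S O) => uu p | _ => 0 end.

Lemma q_gt0 p : 1 < p -> 0 < conj_exp p.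
Proof. by move=> p1; rewrite /conj_exp divr_gt0//; lra. Qed.

Lemma uu_gt0 p : 0 < uu p.
Proof. by rewrite /uu powR_gt0. Qed.

Lemma uu_pow p : 1 < p -> uu p `^ conj_exp p = 2^-1.
Proof.
move=> p1; rewrite /uu -powRrM mulNr mulVf ?gt_eqF ?q_gt0//.
by rewrite powR_inv1.
Qed.

Lemma fin3_av p : fin3 (av p).
Proof. by case=> [|[|[|]]]. Qed.

Lemma fin3_bv p : fin3 (bv p).
Proof. by case=> [|[|[|]]]. Qed.

Lemma dual_av p : 1 < p -> dual_sphere p (av p).
Proof.
move=> p1; have q0 := @q_gt0 p p1.
have [h1 h2] := @Sp_fin3 R _ _ q0 (fin3_av p).
split => //; rewrite /lpnorm -/(Sp _ _) h2 /=.
rewrite normr0 powR0 ?gt_eqF// addr0 gtr0_norm ?uu_gt0// uu_pow//.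
have -> : (2^-1 + 2^-1 : R) = 1 by field.
by rewrite pow1.
Qed.

Lemma dual_bv p : 1 < p -> dual_sphere p (bv p).
Proof.
move=> p1; have q0 := @q_gt0 p p1.
have [h1 h2] := @Sp_fin3 R _ _ q0 (fin3_bv p).
split => //; rewrite /lpnorm -/(Sp _ _) h2 /=.
rewrite normr0 powR0 ?gt_eqF// addr0 gtr0_norm ?uu_gt0// uu_pow//.
have -> : (2^-1 + 2^-1 : R) = 1 by field.
by rewrite pow1.
Qed.

Lemma wedge_intro p k : 1 < p -> in_lp p k -> k 0%N + k 1%N <= 0 -> k 0%N + k 2%N <= 0 ->
  wedge p (av p) (bv p) k.
Proof.
move=> p1 ck h1 h2; split => // c [l [m [l0 [m0 [_ ->]]]]].
set N := lpnorm _ _.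
have N0 : 0 <= N by rewrite /N /lpnorm powR_ge0.
rewrite pairing_fin3; last first.
  by move=> i i3; rewrite fin3_av// fin3_bv// !mulr0 addr0 mul0r.
rewrite /=.
have -> : (l * uu p + m * uu p) / N * k 0%N + (l * uu p + m * 0) / N * k 1%N +
    (l * 0 + m * uu p) / N * k 2%N = (uu p / N) * (l * (k 0%N + k 1%N) + m * (k 0%N + k 2%N)).
  by rewrite /=; ring.
apply: mulr_ge0_le0; first by rewrite divr_ge0// ltW// uu_gt0.
have : l * (k 0%N + k 1%N) <= 0 by apply: mulr_ge0_le0.
have : m * (k 0%N + k 2%N) <= 0 by apply: mulr_ge0_le0.
lra.
Qed.

Lemma av_delta p : 1 < p -> delta p (av p) (bv p) (av p).
Proof.
move=> p1; exists 1, 0; split; first exact: ler01.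
split; first exact: lexx.
split; first by left; exact: oner_neq0.
have -> : (fun j => 1 * av p j + 0 * bv p j) = av p.
  by apply/funext => j; rewrite mul1r mul0r addr0.
have [_ ->] := @dual_av p p1.
by apply: funext => j; rewrite divr1 mul1r mul0r addr0.
Qed.

Lemma bv_delta p : 1 < p -> delta p (av p) (bv p) (bv p).
Proof.
move=> p1; exists 0, 1; split; first exact: lexx.
split; first exact: ler01.
split; first by right; exact: oner_neq0.
have -> : (fun j => 0 * av p j + 1 * bv p j) = bv p.
  by apply/funext => j; rewrite mul1r mul0r add0r.
have [_ ->] := @dual_bv p p1.
by apply: funext => j; rewrite divr1 mul1r mul0r add0r.
Qed.

Lemma wedge_elim p k : 1 < p -> wedge p (av p) (bv p) k ->
  [/\ in_lp p k, k 0%N + k 1%N <= 0 & k 0%N + k 2%N <= 0].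
Proof.
move=> p1 [ck hk]; split => //.
  have := hk _ (@av_delta p p1); rewrite (@pairing_fin3 R _ k (@fin3_av p)) /= mul0r addr0.
  by rewrite -mulrDr pmulr_rle0 ?uu_gt0.
have := hk _ (@bv_delta p p1); rewrite (@pairing_fin3 R _ k (@fin3_bv p)) /= mul0r addr0.
by rewrite -mulrDr pmulr_rle0 ?uu_gt0.
Qed.

End Aux4.

Arguments Sp {R}.
Arguments fin3 {R}.
Arguments av {R}.
Arguments bv {R}.

Section Aux5.
Variable R : realType.
Implicit Types (f g x y v k : nat -> R) (p : R).

Lemma coord_cvg p (u : nat -> nat -> R) x i : 0 < p -> (forall n, in_lp p (u n)) -> in_lp p x ->
  (fun n => lpnorm p (fun j => u n j - x j)) @ \oo --> (0 : R) ->
  (fun n => u n i) @ \oo --> x i.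
Proof.
move=> p0 cu cx /cvgrPdist_lt h; apply/cvgrPdist_lt => e e0.
have := h e e0; apply: filterS => n; rewrite sub0r normrN => hn.
rewrite distrC.
have := @coord_le_lpnorm R p (fun j => u n j - x j) i p0 (@in_lp_sub R _ _ _ p0 (cu n) cx).
move=> /le_lt_trans; apply.
by rewrite (le_lt_trans (ler_norm _)).
Qed.

Lemma lim_le0 (s : nat -> R) l : s @ \oo --> l -> (forall n, s n <= 0) -> l <= 0.
Proof.
move=> hs hn; rewrite -(cvg_lim _ hs)//; apply: limr_le; first exact: (cvgP _ hs).
by near=> n.
Unshelve. all: by end_near. Qed.

Lemma wedge_ccc p : 1 < p -> closed_convex_cone p (wedge p (av p) (bv p)).
Proof.
move=> p1; have p0 : 0 < p by lra.
split; first by move=> k [].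
split.
  move=> u x Wu cx hcv.
  have cu : forall n, in_lp p (u n) by move=> n; case: (Wu n).
  have c0 := @coord_cvg p u x 0%N p0 cu cx hcv.
  have c1 := @coord_cvg p u x 1%N p0 cu cx hcv.
  have c2 := @coord_cvg p u x 2%N p0 cu cx hcv.
  apply: wedge_intro => //.
    apply: (@lim_le0 (fun n => u n 0%N + u n 1%N)); first exact: cvgD c0 c1.
    move=> n.
    by have [_ ? _] := @wedge_elim R p _ p1 (Wu n).
  apply: (@lim_le0 (fun n => u n 0%N + u n 2%N)); first exact: cvgD c0 c2.
  move=> n.
  by have [_ _ ?] := @wedge_elim R p _ p1 (Wu n).
split.
  move=> x y t Wx Wy t0 t1.
  have [cx hx1 hx2] := @wedge_elim R p _ p1 Wx.
  have [cy hy1 hy2] := @wedge_elim R p _ p1 Wy.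
  have t1' : 0 <= 1 - t by lra.
  apply: wedge_intro => //; first exact: in_lp_comb.
    have : t * (x 0%N + x 1%N) <= 0 by apply: mulr_ge0_le0.
    have : (1 - t) * (y 0%N + y 1%N) <= 0 by apply: mulr_ge0_le0.
    lra.
  have : t * (x 0%N + x 2%N) <= 0 by apply: mulr_ge0_le0.
  have : (1 - t) * (y 0%N + y 2%N) <= 0 by apply: mulr_ge0_le0.
  lra.
move=> k l Wk l0.
have [ck hk1 hk2] := @wedge_elim R p _ p1 Wk.
apply: wedge_intro => //; first exact: in_lp_scale.
  by rewrite -mulrDr; apply: mulr_ge0_le0.
by rewrite -mulrDr; apply: mulr_ge0_le0.
Qed.

End Aux5.

Arguments Sp {R}.
Arguments fin3 {R}.
Arguments av {R}.
Arguments bv {R}.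

Section Aux6.
Variable R : realType.
Implicit Types (f g x y v k : nat -> R) (p : R).

Definition xv : nat -> R := fun i => match i with O => 1 | S O => 1 | _ => 0 end.
Definition yv : nat -> R := fun i => match i with O => 1 | S (S O) => 1 | _ => 0 end.
Definition zv : nat -> R := fun i => 2^-1 * xv i + (1 - 2^-1) * yv i.
Definition kv (d : R) : nat -> R :=
  fun i => match i with O => d | S O => - d | S (S O) => - d | _ => 0 end.

Lemma fin3_xv : fin3 xv. Proof. by case=> [|[|[|]]]. Qed.
Lemma fin3_yv : fin3 yv. Proof. by case=> [|[|[|]]]. Qed.
Lemma fin3_kv d : fin3 (kv d). Proof. by case=> [|[|[|]]]. Qed.
Lemma fin3_zv : fin3 zv.
Proof. by move=> i i3; rewrite /zv fin3_xv// fin3_yv// !mulr0 addr0. Qed.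
Lemma fin3_0 : fin3 (fun _ : nat => (0 : R)). Proof. by []. Qed.

Lemma fin3_sub v w : fin3 v -> fin3 w -> fin3 (fun i => v i - w i).
Proof. by move=> fv fw i i3; rewrite fv// fw// subr0. Qed.

Lemma wedge0 p : 1 < p -> wedge p (av p) (bv p) (fun _ => 0).
Proof.
move=> p1; have p0 : 0 < p by lra.
apply: wedge_intro => //=; try by rewrite addr0.
by have [] := @Sp_fin3 R p _ p0 fin3_0.
Qed.

Lemma pow0 p : 0 < p -> `|0 : R| `^ p = 0.
Proof. by move=> p0; rewrite normr0 powR0// gt_eqF. Qed.

Lemma xv_polar p : 1 < p -> polar p (wedge p (av p) (bv p)) xv.
Proof.
move=> p1; have p0 : 0 < p by lra.
apply: polar_intro => //.
- by move=> k [].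
- exact: wedge0.
- by have [] := @Sp_fin3 R p _ p0 fin3_xv.
move=> k Wk kn0; have [ck h1 h2] := @wedge_elim R p _ p1 Wk.
apply: strict_gen => //; first exact: fin3_xv.
- rewrite /xv /= normr1 pow1 pow0// sub0r normrN.
  have b0 := @bern R p (k 0%N) p1.
  have b1 := @bern R p (k 1%N) p1.
  have := powR_ge0 `|k 2%N| p.
  have : p * k 0%N + p * k 1%N <= 0 by rewrite -mulrDr; apply: mulr_ge0_le0 => //; lra.
  lra.
- rewrite /xv /= normr1 pow1 pow0// sub0r normrN.
  have b0 := @bern R p (k 0%N) p1.
  have b1 := @bern R p (k 1%N) p1.
  have g2 := powR_ge0 `|k 2%N| p.
  have : p * k 0%N + p * k 1%N <= 0 by rewrite -mulrDr; apply: mulr_ge0_le0 => //; lra.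
  move=> hp /orP[/orP[hk|hk]|hk].
  + have := @bern_strict R p (k 0%N) p1 hk; lra.
  + have := @bern_strict R p (k 1%N) p1 hk; lra.
  + have : 0 < `|k 2%N| `^ p by rewrite powR_gt0// normr_gt0.
    lra.
Qed.

Lemma yv_polar p : 1 < p -> polar p (wedge p (av p) (bv p)) yv.
Proof.
move=> p1; have p0 : 0 < p by lra.
apply: polar_intro => //.
- by move=> k [].
- exact: wedge0.
- by have [] := @Sp_fin3 R p _ p0 fin3_yv.
move=> k Wk kn0; have [ck h1 h2] := @wedge_elim R p _ p1 Wk.
apply: strict_gen => //; first exact: fin3_yv.
- rewrite /yv /= normr1 pow1 pow0// sub0r normrN.
  have b0 := @bern R p (k 0%N) p1.
  have b1 := @bern R p (k 2%N) p1.
  have := powR_ge0 `|k 1%N| p.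
  have : p * k 0%N + p * k 2%N <= 0 by rewrite -mulrDr; apply: mulr_ge0_le0 => //; lra.
  lra.
- rewrite /yv /= normr1 pow1 pow0// sub0r normrN.
  have b0 := @bern R p (k 0%N) p1.
  have b1 := @bern R p (k 2%N) p1.
  have g2 := powR_ge0 `|k 1%N| p.
  have : p * k 0%N + p * k 2%N <= 0 by rewrite -mulrDr; apply: mulr_ge0_le0 => //; lra.
  move=> hp /orP[/orP[hk|hk]|hk].
  + have := @bern_strict R p (k 0%N) p1 hk; lra.
  + have : 0 < `|k 1%N| `^ p by rewrite powR_gt0// normr_gt0.
    lra.
  + have := @bern_strict R p (k 2%N) p1 hk; lra.
Qed.

Lemma zv_not_polar p : 1 < p -> p != 2 -> ~ polar p (wedge p (av p) (bv p)) zv.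
Proof.
move=> p1 pn2; have p0 : 0 < p by lra.
have [cz Sz] := @Sp_fin3 R p _ p0 fin3_zv.
have z0 : zv 0%N = 1 by rewrite /zv /xv /yv /=; field.
have z1 : zv 1%N = 2^-1 by rewrite /zv /xv /yv /=; field.
have z2 : zv 2%N = 2^-1 by rewrite /zv /xv /yv /=; field.
rewrite z0 z1 z2 normr1 pow1 gtr0_norm// in Sz.
have key d : Sp p (fun i => zv i - kv d i) =
    `|1 - d| `^ p + `|2^-1 + d| `^ p + `|2^-1 + d| `^ p.
  have [_ ->] := @Sp_fin3 R p _ p0 (@fin3_sub _ _ fin3_zv (fin3_kv d)).
  by rewrite z0 z1 z2 /kv /= !opprK.
have Wk d : wedge p (av p) (bv p) (kv d).
  apply: wedge_intro => //=; try by rewrite subrr.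
  by have [] := @Sp_fin3 R p _ p0 (fin3_kv d).
have ck d : in_lp p (kv d) by have [] := @Sp_fin3 R p _ p0 (fin3_kv d).
have [plt2|pgt2|] := ltgtP p 2; last by move=> e; move: pn2; rewrite e eqxx.
- have [e [e0 e1 he]] := @descent_lt2 R p p1 plt2.
  apply: (@not_polar R p _ zv (kv (- e)) p0 (Wk _) cz (ck _)).
  rewrite key Sz opprK !ger0_norm; [exact: he|lra|lra].
- have [e [e0 e1 he]] := @descent_gt2 R p pgt2.
  apply: (@not_polar R p _ zv (kv e) p0 (Wk _) cz (ck _)).
  rewrite key Sz !ger0_norm; [exact: he|lra|lra].
Qed.

End Aux6.

Theorem mainTheorem8 (R : realType) (p : R) (hp : 1 < p) :
  ((forall K : set (nat -> R), closed_convex_cone p K -> cvx_set (polar p K))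
     <-> p = 2)
  /\
  (p != 2 ->
    exists a b : nat -> R,
      [/\ dual_sphere p a, dual_sphere p b,
          b <> a /\ b <> (fun i => - a i),
          (forall i : nat, (3 <= i)%N -> a i = 0 /\ b i = 0) &
          ~ cvx_set (polar p (wedge p a b))]).
Proof.
have ncvx : p != 2 -> ~ cvx_set (polar p (wedge p (@av R p) (@bv R p))).
  move=> pn2 hc; apply: (@zv_not_polar R p hp pn2).
  apply: (hc (@xv R) (@yv R) 2^-1).
  - exact: (@xv_polar R p hp).
  - exact: (@yv_polar R p hp).
  - lra.
  - lra.
split; last first.
  move=> pn2; exists (@av R p), (@bv R p); split.
  - exact: dual_av.
  - exact: dual_bv.
  - split => [/(congr1 (fun f => f 1%N))|/(congr1 (fun f => f 0%N))] /= h.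
      by have := @uu_gt0 R p; rewrite -h ltxx.
    have := @uu_gt0 R p; move: h; lra.
  - by move=> i i3; split; [exact: fin3_av|exact: fin3_bv].
  - exact: ncvx.
split.
  move=> H; apply/eqP; apply: contraT => pn2.
  by have := ncvx pn2 (H _ (@wedge_ccc R p hp)).
move=> ->; exact: polar_convex2.
Qed.
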